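(* Let $U=U_1\times\cdots\times U_m\subset\mathbb{R}^m_+$ with each $U_i\subseteq\mathbb{R}$, let $C\subseteq\mathbb{R}^m$ and $\overline{U}=U\cap C$, and assume $U$ and $\overline{U}$ are convex compact sets. Let $c\in\mathbb{R}^{n_1}$, $d\in\mathbb{R}^{n_2}$, $a_i\in\mathbb{R}^{n_1}$, $g_i\in\mathbb{R}^{n_2}$ ($i\in[m]$). Let $$z_{\rm cp}=\inf_{x,y}\{c^Tx+d^Ty:\ a_i^Tx+g_i^Ty\ge u_i\ \forall u\in\overline{U},\ \forall i\in[m]\},$$ and for a set $S$ let $$z(S)=\inf_{x\in\mathbb{R}^{n_1},\ y:S\to\mathbb{R}^{n_2}}\Big\{c^Tx+\sup_{u\in S}d^Ty(u):\ a_i^Tx+g_i^Ty(u)\ge u_i\ \forall u\in S,\ \forall i\in[m]\Big\},\qquad z_{\rm acp}=z(\overline{U}).$$ Assume the following compactness condition holds for the adaptive problem under $\Pi(\overline{U}^\downarrow)$: for every $x$ that is the first-stage part of some feasible solution of the problem defining $z(\Pi(\overline{U}^\downarrow))$, there is a compact set $Y_x\subseteq\mathbb{R}^{n_2}$ such that for every $u\in\Pi(\overline{U}^\downarrow)$ and $y\in\mathbb{R}^{n_2}$, if $a_i^Tx+g_i^Ty\ge u_i$ for all $i\in[m]$ then $y\in Y_x$. Suppose $0<z_{\rm acp}\le z_{\rm cp}<\infty$. Then, with $\rho_{\rm adapt}=\rho\big(\Pi(\overline{U}^\downarrow),\overline{U}^\downarrow\big)$, $$\frac{z_{\rm acp}}{z_{\rm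 cp}}\ge\rho_{\rm adapt}.$$
   Context: $[m]=\{1,\dots,m\}$. For $S\subseteq\mathbb{R}^m_+$, $S^\downarrow=\{t\in\mathbb{R}^m_+:\exists s\in S,\ t\le s\text{ componentwise}\}$. For $S\subseteq\mathbb{R}^m$, $\Pi_i(S)$ is the projection of $S$ onto the $i$-th coordinate and $\Pi(S)=\Pi_1(S)\times\cdots\times\Pi_m(S)$. For $r\ge0$, $rS=\{rx:x\in S\}$; $\rho(S_1,S_2)=\max\{\rho\ge0:\rho S_1\subseteq S_2\}$. *)

(* Defs.v *)
From HB Require Import structures.
From mathcomp Require Import all_boot all_order all_algebra.
From mathcomp Require Import all_classical all_reals all_analysis.
Set Implicit Arguments. Unset Strict Implicit. Unset Printing Implicit Defensive.
Import Order.TTheory GRing.Theory Num.Theory.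
Import numFieldNormedType.Exports.
Local Open Scope classical_set_scope.
Local Open Scope ring_scope.

Section Defs.
Variable R : realType.

(* vectors of R^n are row vectors 'rV[R]_n; coordinate i of v is v ord0 i *)
Definition dotv n (a x : 'rV[R]_n) : R := \sum_(j < n) a ord0 j * x ord0 j.

Definition nonneg_orthant m : set 'rV[R]_m :=
  [set t | forall i, 0 <= t ord0 i].

Definition downclosure m (S : set 'rV[R]_m) : set 'rV[R]_m :=
  [set t | (forall i, 0 <= t ord0 i) /\
           exists2 s, S s & forall i, t ord0 i <= s ord0 i].

Definition proj_i m (S : set 'rV[R]_m) (i : 'I_m) : set R :=
  [set s ord0 i | s in S].

Definition proj_box m (S : set 'rV[R]_m) : set 'rV[R]_m :=
  [set t | forall i, proj_i S i (t ord0 i)].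

Definition scale_set m (r : R) (S : set 'rV[R]_m) : set 'rV[R]_m :=
  [set r *: x | x in S].

(* rho(S1,S2) = max{ rho >= 0 : rho S1 subset S2 }, taken as a supremum in
   the extended reals (it equals the max whenever the max exists). *)
Definition rho_fit m (S1 S2 : set 'rV[R]_m) : \bar R :=
  ereal_sup [set r%:E | r in [set r : R | 0 <= r /\ scale_set r S1 `<=` S2]].

Definition static_feasible m n1 n2 (a : 'I_m -> 'rV[R]_n1) (g : 'I_m -> 'rV[R]_n2)
  (S : set 'rV[R]_m) (x : 'rV[R]_n1) (y : 'rV[R]_n2) : Prop :=
  forall u, S u -> forall i, u ord0 i <= dotv (a i) x + dotv (g i) y.

Definition z_cp m n1 n2 (c : 'rV[R]_n1) (d : 'rV[R]_n2)
  (a : 'I_m -> 'rV[R]_n1) (g : 'I_m -> 'rV[R]_n2) (S : set 'rV[R]_m) : \bar R :=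
  ereal_inf [set (dotv c xy.1 + dotv d xy.2)%:E |
             xy in [set xy | static_feasible a g S xy.1 xy.2]].

Definition adapt_feasible m n1 n2 (a : 'I_m -> 'rV[R]_n1) (g : 'I_m -> 'rV[R]_n2)
  (S : set 'rV[R]_m) (x : 'rV[R]_n1) (y : 'rV[R]_m -> 'rV[R]_n2) : Prop :=
  forall u, S u -> forall i, u ord0 i <= dotv (a i) x + dotv (g i) (y u).

Definition z_adapt m n1 n2 (c : 'rV[R]_n1) (d : 'rV[R]_n2)
  (a : 'I_m -> 'rV[R]_n1) (g : 'I_m -> 'rV[R]_n2) (S : set 'rV[R]_m) : \bar R :=
  ereal_inf [set ((dotv c xy.1)%:E + ereal_sup [set (dotv d (xy.2 u))%:E | u in S])%E |
             xy in [set xy | adapt_feasible a g S xy.1 xy.2]].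

Definition compactness_condition m n1 n2 (a : 'I_m -> 'rV[R]_n1)
  (g : 'I_m -> 'rV[R]_n2) (S : set 'rV[R]_m) : Prop :=
  forall x : 'rV[R]_n1, (exists y, adapt_feasible a g S x y) ->
    exists Y : set 'rV[R]_n2, compact Y /\
      forall u y, S u ->
        (forall i, u ord0 i <= dotv (a i) x + dotv (g i) y) -> Y y.

End Defs.

(* Main.v *)
Require Import Defs.
From HB Require Import structures.
From mathcomp Require Import all_boot all_order all_algebra.
From mathcomp Require Import all_classical all_reals all_analysis.
Import Order.TTheory GRing.Theory Num.Theory.
Import numFieldNormedType.Exports.
Local Open Scope classical_set_scope.
Local Open Scope ring_scope.

Lemma dotvZ (R : realType) n (a x : 'rV[R]_n) (k : R) :
  dotv a (k *: x) = k * dotv a x.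
Proof.
rewrite /dotv mulr_sumr; apply: eq_bigr => j _; rewrite mxE.
by rewrite mulrCA.
Qed.

Theorem theorem3 (R : realType) (m n1 n2 : nat)
  (Ui : 'I_m -> set R) (C : set 'rV[R]_m)
  (c : 'rV[R]_n1) (d : 'rV[R]_n2)
  (a : 'I_m -> 'rV[R]_n1) (g : 'I_m -> 'rV[R]_n2) :
  let U : set 'rV[R]_m := [set u | forall i, Ui i (u ord0 i)] in
  let Ubar := U `&` C in
  U `<=` @nonneg_orthant R m ->
  convex_set (U : set (convex_lmodType 'rV[R]_m)) -> compact U ->
  convex_set (Ubar : set (convex_lmodType 'rV[R]_m)) -> compact Ubar ->
  compactness_condition a g (proj_box (downclosure Ubar)) ->
  (0 < z_adapt c d a g Ubar)%E ->
  (z_adapt c d a g Ubar <= z_cp c d a g Ubar)%E ->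
  (z_cp c d a g Ubar < +oo)%E ->
  (rho_fit (proj_box (downclosure Ubar)) (downclosure Ubar)
     <= (fine (z_adapt c d a g Ubar) / fine (z_cp c d a g Ubar))%:E)%E.
Proof.
move=> U Ubar Unn _ _ _ cUbar _ Apos AB Bfin.
set A := z_adapt c d a g Ubar in Apos AB *.
set B := z_cp c d a g Ubar in AB Bfin *.
have [u0 Uu0] : Ubar !=set0.
  apply/set0P/negP => /eqP U0.
  have : (A <= -oo)%E.
    apply: ereal_inf_lbound; exists (0 : 'rV[R]_n1, fun _ : 'rV[R]_m => 0 : 'rV[R]_n2).
      by move=> u; rewrite U0.
    rewrite /= U0 image_set0 ereal_sup0 /=.
    by rewrite addeNy.
  by rewrite leeNy_eq => /eqP Ainf; move: Apos; rewrite Ainf.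
have hmax : forall i : 'I_m, exists v, Ubar v /\ forall t, Ubar t -> t ord0 i <= v ord0 i.
  move=> i.
  have [v /set_mem vU hv] := @compact_EVT_max _ R (fun M : 'rV[R]_m => M ord0 i) Ubar
    (ex_intro _ u0 Uu0) cUbar (continuous_subspaceT (@coord_continuous R 1 m ord0 i)).
  by exists v; split => // t tU; apply: hv; apply/mem_set.
have /choice [v hv] := hmax.
pose us : 'rV[R]_m := \row_i (v i) ord0 i.
have UD : forall t, Ubar t -> downclosure Ubar t.
  move=> t tU; split; first by move=> i; apply: (Unn t); case: tU.
  by exists t.
have Pus : proj_box (downclosure Ubar) us.
  move=> i; exists (v i); first by apply: UD; case: (hv i).
  by rewrite mxE.
have A0 : (0 <= A)%E by apply: ltW.
have Afin : A \is a fin_num by rewrite ge0_fin_numE //; apply: le_lt_trans Bfin.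
have Bfin' : B \is a fin_num by rewrite ge0_fin_numE //; apply: le_trans AB.
have a0 : 0 < fine A by rewrite -lte_fin fineK.
have b0 : 0 < fine B by rewrite -lte_fin fineK //; apply: lt_le_trans AB.
apply: ge_ereal_sup => _ [r [r0 hr] <-].
rewrite lee_fin ler_pdivlMr //.
have [->|rpos] := eqVneq r 0; first by rewrite mul0r ltW.
have {}rpos : 0 < r by rewrite lt_neqAle eq_sym rpos r0.
rewrite -lee_fin (fineK Afin).
apply: le_ereal_inf_tmp => _ [[x y] /= feas <-].
have [s sU hs] : exists2 s, Ubar s & forall i, r * us ord0 i <= s ord0 i.
  have : downclosure Ubar (r *: us) by apply: hr; exists us.
  by case=> _ [s sU hs]; exists s => // i; move: (hs i); rewrite mxE.
have stat : static_feasible a g Ubar (r^-1 *: x) (r^-1 *: y s).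
  move=> t tU i; rewrite !dotvZ -mulrDr.
  apply: (le_trans (_ : _ <= us ord0 i)).
    by rewrite mxE; case: (hv i) => _; apply.
  rewrite mulrC ler_pdivlMr // mulrC.
  by apply: le_trans (hs i) _; apply: feas.
have hB : (B <= (dotv c (r^-1 *: x) + dotv d (r^-1 *: y s))%:E)%E.
  by apply: ereal_inf_lbound; exists (r^-1 *: x, r^-1 *: y s).
have hB' : r * fine B <= dotv c x + dotv d (y s).
  move: hB; rewrite -[B](fineK Bfin') lee_fin !dotvZ -mulrDr.
  by rewrite mulrC ler_pdivlMr // mulrC.
apply: (@le_trans _ _ ((dotv c x)%:E + (dotv d (y s))%:E)%E).
  by rewrite -EFinD lee_fin.
apply: leeD2l; apply: ereal_sup_ubound; by exists s.
Qed.
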